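(* Let $G$ be a graph with $n$ vertices and maximum degree $\Delta$, and let $1\leq k\leq n$. (i) If $0\leq \alpha \leq \frac{1}{2}$, then $S_k(A_{\alpha}(G))\geq (1-\alpha) S_k(Q(G))+(2\alpha-1)k\Delta$. (ii) If $\frac{1}{2}\leq \alpha \leq 1$, then $S_k(A_{\alpha}(G))\geq \alpha S_k(Q(G))+(1-2\alpha)S_k(A(G))$. If $G$ is a regular graph, then equality holds in both inequalities.
   Context: All graphs are simple and undirected. $A(G)$ is the adjacency matrix, $D(G)$ the diagonal degree matrix, $Q(G)=D(G)+A(G)$ the signless Laplacian matrix, and $A_{\alpha}(G)=\alpha D(G)+(1-\alpha)A(G)$. For a real symmetric matrix $M$ with eigenvalues $\lambda_1(M)\geq\cdots\geq\lambda_n(M)$, $S_k(M)=\sum_{i=1}^k\lambda_i(M)$. *)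

(* Defs.v *)
(* Real numbers are modelled by an arbitrary real closed
   field R (the reals are an instance). *)
From HB Require Import structures.
From mathcomp Require Import all_boot all_order all_algebra.
Set Implicit Arguments. Unset Strict Implicit. Unset Printing Implicit Defensive.
Import Order.TTheory GRing.Theory Num.Theory.
Local Open Scope ring_scope.

Definition simple_graph (n : nat) (e : rel 'I_n) : Prop :=
  (forall i, ~~ e i i) /\ (forall i j, e i j = e j i).

Definition deg (n : nat) (e : rel 'I_n) (i : 'I_n) : nat := #|[set j | e i j]|.

Definition maxdeg (n : nat) (e : rel 'I_n) : nat := (\max_(i < n) deg e i)%N.

Definition regular (n : nat) (e : rel 'I_n) : Prop :=
  exists r : nat, forall i, deg e i = r.

Definition adjm (R : nzRingType) (n : nat) (e : rel 'I_n) : 'M[R]_n :=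
  \matrix_(i, j) (e i j)%:R.

Definition degm (R : nzRingType) (n : nat) (e : rel 'I_n) : 'M[R]_n :=
  \matrix_(i, j) ((i == j)%:R * (deg e i)%:R).

Definition signlessm (R : nzRingType) (n : nat) (e : rel 'I_n) : 'M[R]_n :=
  degm R e + adjm R e.

Definition Aalpha (R : nzRingType) (n : nat) (e : rel 'I_n) (a : R) : 'M[R]_n :=
  a *: degm R e + (1 - a) *: adjm R e.

(* s is the list of eigenvalues of M (with multiplicity), in non-increasing
   order lambda_1 >= ... >= lambda_n: s lists the roots of the characteristic
   polynomial of M with multiplicities, sorted decreasingly. *)
Definition is_spectrum (R : rcfType) (n : nat) (M : 'M[R]_n) (s : seq R) : Prop :=
  sorted (>=%R) s /\ char_poly M = \prod_(x <- s) ('X - x%:P).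

Definition Sk (R : nzRingType) (k : nat) (s : seq R) : R := \sum_(i < k) s`_i.

(* Main.v *)
Require Import Defs.
From HB Require Import structures.
From mathcomp Require Import all_boot all_order all_algebra all_fingroup.
From mathcomp Require Import sesquilinear spectral ring zify complex.
Set Implicit Arguments. Unset Strict Implicit. Unset Printing Implicit Defensive.
Import Order.TTheory GRing.Theory Num.Theory.
Local Open Scope ring_scope.
Local Open Scope sesquilinear_scope.

Section Gen.
Variable C : numClosedFieldType.

Lemma unitary_tmul n (P : 'M[C]_n) : P \is unitarymx -> P^t* *m P = 1%:M.
Proof. by move=> PU; have := mulmxKtV (1%:M : 'M_n) PU (erefl n); rewrite mul1mx. Qed.

Lemma char_poly_uconj n (P D : 'M[C]_n) : P \is unitarymx ->
  char_poly (P^t* *m D *m P) = char_poly D.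
Proof.
move=> PU; rewrite /char_poly /char_poly_mx.
set Pa := map_mx polyC (P^t*); set Pp := map_mx polyC P.
have PaPp : Pa *m Pp = 1%:M by rewrite -map_mxM unitary_tmul // map_mx1.
have XE : 'X%:M = Pa *m 'X%:M *m Pp :> 'M_n.
  by rewrite mul_mx_scalar -scalemxAl PaPp scalemx1.
rewrite {1}XE !map_mxM -/Pa -/Pp -mulmxBl -mulmxBr !det_mulmx mulrAC -det_mulmx PaPp det1 mul1r.
done.
Qed.

Lemma spec_sorted n (A : 'M[C]_n) (s : seq C) : A^t* = A ->
  char_poly A = \prod_(x <- s) ('X - x%:P) ->
  size s = n /\ exists2 V : 'M_n, V \is unitarymx & A = V^t* *m diag_mx (\row_i s`_i) *m V.
Proof.
move=> Aher cpA.
have /orthomx_spectralP AE : A \is normalmx by apply/normalmxP; rewrite Aher.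
set P := spectralmx A in AE; set d := spectral_diag A in AE.
have PU : P \is unitarymx by apply: spectral_unitarymx.
rewrite invmx_unitary // in AE.
set t : n.-tuple C := [tuple d 0 i | i < n].
have cp : char_poly A = \prod_(x <- t) ('X - x%:P).
  rewrite AE char_poly_uconj // char_poly_trig ?diag_mx_is_trig // big_tuple.
  by apply: eq_bigr => i _; rewrite !mxE eqxx mulr1n tnth_mktuple.
have pst : perm_eq s t by apply: prod_XsubC_eq; rewrite -cpA -cp.
split; first by rewrite (perm_size pst) size_tuple.
have [p sE] := tuple_permP pst.
have sEi : forall i : 'I_n, s`_i = d 0 (p i).
  by move=> i; rewrite sE nth_mktuple tnth_mktuple.
set Q : 'M[C]_n := perm_mx p.
exists (Q *m P).
  apply/unitarymxP; rewrite trmx_mul map_mxM mulmxA -(mulmxA Q) (unitarymxP PU) mulmx1.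
  by rewrite /Q tr_perm_mx map_perm_mx -perm_mxM mulgV perm_mx1.
rewrite trmx_mul map_mxM /Q tr_perm_mx map_perm_mx AE !mulmxA; congr (_ *m _).
rewrite -!mulmxA; congr (_ *m _).
have -> : diag_mx (\row_i s`_i) *m perm_mx p = col_perm p^-1 (diag_mx (\row_i s`_i)).
  by rewrite col_permE invgK.
rewrite -row_permE.
apply/matrixP => i j; rewrite !mxE sEi !permKV.
by rewrite (inj_eq (@perm_inj _ _)).
Qed.

Definition wt k n (W : 'M[C]_(k, n)) (i : 'I_n) := \sum_(r < k) W r i * (W r i)^*.

Lemma tr_diag_form k n (W : 'M[C]_(k, n)) (x : 'rV_n) :
  \tr (W *m diag_mx x *m W^t*) = \sum_i x 0 i * wt W i.
Proof.
rewrite /mxtrace /wt mul_mx_diag.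
rewrite [RHS](eq_bigr _ (fun i _ => mulr_sumr _ _ _ _)) [RHS]exchange_big /=; apply: eq_bigr => r _.
rewrite !mxE; apply: eq_bigr => i _; rewrite !mxE.
by rewrite mulrA [W r i * _]mulrC.
Qed.

Lemma wt_ge0 k n (W : 'M[C]_(k, n)) i : 0 <= wt W i.
Proof. by apply: sumr_ge0 => r _; apply: mul_conjC_ge0. Qed.

Lemma wt_sum k n (W : 'M[C]_(k, n)) : W *m W^t* = 1%:M -> \sum_i wt W i = k%:R.
Proof.
move=> WW; rewrite /wt exchange_big /= -(mxtrace1 C k) -WW /mxtrace.
by apply: eq_bigr => r _; rewrite !mxE; apply: eq_bigr => i _; rewrite !mxE.
Qed.

Lemma wt_le1 k n (W : 'M[C]_(k, n)) i : W *m W^t* = 1%:M -> wt W i <= 1.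
Proof.
move=> WW; set Pm := W^t* *m W.
have PP : Pm *m Pm = Pm by rewrite /Pm mulmxA -(mulmxA _ W) WW mulmx1.
have Pii : Pm i i = wt W i.
  by rewrite /Pm mxE /wt; apply: eq_bigr => r _; rewrite !mxE mulrC.
have Pji : forall j, Pm j i = (Pm i j)^*.
  move=> j; rewrite /Pm !mxE rmorph_sum; apply: eq_bigr => r _.
  by rewrite !mxE rmorphM mulrC; congr (_ * _); exact: (esym (conjCK (W r i))).
have wreal : (wt W i)^* = wt W i by apply/CrealP/ger0_real/wt_ge0.
have key : wt W i * wt W i <= wt W i.
  rewrite -{3}Pii -PP mxE (bigD1 i) //= Pji Pii wreal lerDl.
  by apply: sumr_ge0 => j _; rewrite Pji mul_conjC_ge0.
have [->|wne0] := eqVneq (wt W i) 0; first by rewrite ler01.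
have wgt0 : 0 < wt W i by rewrite lt0r wne0 wt_ge0.
by rewrite -(ler_pM2l wgt0) mulr1.
Qed.

Lemma comb n k (s : seq C) (w : 'I_n -> C) : sorted >=%R s -> size s = n ->
  (0 < k)%N -> (k <= n)%N -> (forall i, 0 <= w i <= 1) -> \sum_(i < n) w i = k%:R ->
  \sum_(i < n) s`_i * w i <= \sum_(i < k) s`_i.
Proof.
move=> srt sz k0 kn hw sw.
set c := s`_k.-1.
have geT : transitive (>=%R : rel C) by move=> x y z /= h1 h2; apply: le_trans h2 h1.
have geR : reflexive (>=%R : rel C) by move=> x /=.
have hi : forall i : 'I_n, (i < k)%N -> c <= s`_i.
  move=> i ik; have := ltn_ord i => iln.
  apply: (sorted_leq_nth geT geR 0 srt); rewrite ?inE ?sz /=; lia.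
have lo : forall i : 'I_n, (k <= i)%N -> s`_i <= c.
  move=> i ik; have := ltn_ord i => iln.
  apply: (sorted_leq_nth geT geR 0 srt); rewrite ?inE ?sz /=; lia.
have sk : \sum_(i < n) ((i < k)%N%:R : C) = k%:R.
  have : \sum_(i < k) (1 : C) = k%:R by rewrite sumr_const card_ord.
  rewrite (big_ord_widen n (fun _ => 1 : C)) // big_mkcond => <-.
  by apply: eq_bigr => i _; case: ifP.
rewrite (big_ord_widen n (fun i => s`_i)) // -subr_ge0 big_mkcond -sumrB /=.
set T := fun i : 'I_n => if (i < k)%N then (s`_i - c) * (1 - w i) else (c - s`_i) * w i.
have -> : \sum_(i < n) ((if (i < k)%N then s`_i else 0) - s`_i * w i) =
   \sum_(i < n) T i + c * (\sum_(i < n) ((i < k)%N%:R : C) - \sum_(i < n) w i).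
  rewrite mulrBr !mulr_sumr -sumrB -big_split; apply: eq_bigr => i _ /=.
  by rewrite /T; case: ifP => _ /=; ring.
rewrite sk sw subrr mulr0 addr0; apply: sumr_ge0 => i _; rewrite /T.
have /andP[w0 w1] := hw i.
case: ifP => h; apply: mulr_ge0; rewrite ?subr_ge0 //.
  by apply: hi; rewrite h.
by apply: lo; rewrite leqNgt h.
Qed.

Lemma tconj_mul m k n (U : 'M[C]_(m, k)) (V : 'M[C]_(k, n)) : (U *m V)^t* = V^t* *m U^t*.
Proof. by rewrite trmx_mul map_mxM. Qed.

Lemma kf_form n k (A : 'M[C]_n) (s : seq C) (U : 'M[C]_(k, n)) V :
  V \is unitarymx -> A = V^t* *m diag_mx (\row_i s`_i) *m V ->
  \tr (U *m A *m U^t*) = \sum_(i < n) s`_i * wt (U *m V^t*) i.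
Proof.
move=> VU AE.
rewrite (_ : \sum_(i < n) s`_i * wt _ i = \sum_i (\row_j s`_j) 0 i * wt (U *m V^t*) i);
  last by apply: eq_bigr => i _; rewrite mxE.
by rewrite -tr_diag_form tconj_mul trmxCK AE !mulmxA.
Qed.

Lemma kf_le n k (A : 'M[C]_n) (s : seq C) (U : 'M[C]_(k, n)) :
  A^t* = A -> sorted >=%R s -> char_poly A = \prod_(x <- s) ('X - x%:P) ->
  (0 < k)%N -> (k <= n)%N -> U *m U^t* = 1%:M ->
  \tr (U *m A *m U^t*) <= \sum_(i < k) s`_i.
Proof.
move=> Aher srt cp k0 kn UU.
have [sz [V VU AE]] := spec_sorted Aher cp.
have WW : (U *m V^t*) *m (U *m V^t*)^t* = 1%:M.
  by rewrite tconj_mul trmxCK mulmxA -(mulmxA U) unitary_tmul // mulmx1.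
rewrite (kf_form U VU AE); apply: comb => //.
  by move=> i; rewrite wt_ge0 (wt_le1 _ WW).
exact: wt_sum WW.
Qed.

Lemma wt_diag k n (W : 'M[C]_(k, n)) i : (W^t* *m W) i i = wt W i.
Proof. by rewrite mxE /wt; apply: eq_bigr => r _; rewrite !mxE mulrC. Qed.

Lemma kf_attain n k (A : 'M[C]_n) (s : seq C) :
  A^t* = A -> char_poly A = \prod_(x <- s) ('X - x%:P) -> (k <= n)%N ->
  exists2 U : 'M[C]_(k, n), U *m U^t* = 1%:M & \tr (U *m A *m U^t*) = \sum_(i < k) s`_i.
Proof.
move=> Aher cp kn.
have [sz [V VU AE]] := spec_sorted Aher cp.
have pidc : forall a b, (pid_mx k : 'M[C]_(a, b))^t* = pid_mx k.
  by move=> a b; rewrite tr_pid_mx map_pid_mx.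
exists (pid_mx k *m V).
  rewrite tconj_mul mulmxA -(mulmxA _ V) (unitarymxP VU) mulmx1 pidc mul_pid_mx.
  by rewrite !minnn (minn_idPr kn) pid_mx_1.
rewrite (kf_form _ VU AE) -mulmxA (unitarymxP VU) mulmx1.
rewrite (big_ord_widen n (fun i => s`_i)) // [RHS]big_mkcond /=; apply: eq_bigr => i _.
rewrite -wt_diag pidc mul_pid_mx mxE eqxx /= !minnn.
by case: ifP => _; rewrite ?mulr1 ?mulr0.
Qed.

Definition FF k n (U : 'M[C]_(k, n)) (M : 'M[C]_n) := \tr (U *m M *m U^t*).

Lemma FFD k n (U : 'M[C]_(k, n)) M1 M2 : FF U (M1 + M2) = FF U M1 + FF U M2.
Proof. by rewrite /FF mulmxDr mulmxDl mxtraceD. Qed.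

Lemma FFZ k n (U : 'M[C]_(k, n)) c M : FF U (c *: M) = c * FF U M.
Proof. by rewrite /FF -scalemxAr -scalemxAl mxtraceZ. Qed.

Lemma FFs k n (U : 'M[C]_(k, n)) c : U *m U^t* = 1%:M -> FF U c%:M = c * k%:R.
Proof. by move=> UU; rewrite /FF mul_mx_scalar -scalemxAl mxtraceZ UU mxtrace1. Qed.

Lemma degm_diag n (e : rel 'I_n) : degm C e = diag_mx (\row_i (deg e i)%:R).
Proof. by apply/matrixP => i j; rewrite !mxE mulrC mulr_natr. Qed.

Lemma FF_deg k n (e : rel 'I_n) (U : 'M[C]_(k, n)) : U *m U^t* = 1%:M ->
  FF U (degm C e) <= k%:R * (maxdeg e)%:R.
Proof.
move=> UU; rewrite /FF degm_diag tr_diag_form -(wt_sum UU) mulr_suml.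
apply: ler_sum => i _; rewrite mxE mulrC ler_wpM2l ?wt_ge0 // ler_nat.
exact: (@leq_bigmax _ (deg e) i).
Qed.


Lemma tconjD n (M N : 'M[C]_n) : (M + N)^t* = M^t* + N^t*.
Proof. by apply/matrixP => i j; rewrite !mxE rmorphD. Qed.

Lemma tconjZ n c (M : 'M[C]_n) : (c *: M)^t* = c^* *: M^t*.
Proof. by apply/matrixP => i j; rewrite !mxE rmorphM. Qed.

Lemma adjm_her n (e : rel 'I_n) : simple_graph e -> (adjm C e)^t* = adjm C e.
Proof.
by case=> _ sym; apply/matrixP => i j; rewrite !mxE rmorph_nat sym.
Qed.

Lemma degm_her n (e : rel 'I_n) : (degm C e)^t* = degm C e.
Proof.
apply/matrixP => i j; rewrite !mxE rmorphM !rmorph_nat.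
case: (eqVneq j i) => [->|h]; first by [].
by rewrite !mul0r.
Qed.

Lemma Aalpha_her n (e : rel 'I_n) (a : C) : simple_graph e -> a^* = a ->
  (Aalpha e a)^t* = Aalpha e a.
Proof.
move=> sg ha; rewrite /Aalpha tconjD !tconjZ adjm_her // degm_her rmorphB rmorph1 ha; congr (_ + (1 - _) *: _); exact: ha.
Qed.

Theorem main_gen n (e : rel 'I_n) k (a : C) (sA sQ sAa : seq C) :
  simple_graph e -> (1 <= k <= n)%N -> 0 <= a <= 1 ->
  sorted >=%R sA -> char_poly (adjm C e) = \prod_(x <- sA) ('X - x%:P) ->
  sorted >=%R sQ -> char_poly (signlessm C e) = \prod_(x <- sQ) ('X - x%:P) ->
  sorted >=%R sAa -> char_poly (Aalpha e a) = \prod_(x <- sAa) ('X - x%:P) ->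
  (a <= 2^-1 ->
     Sk k sAa >= (1 - a) * Sk k sQ + (2 * a - 1) * k%:R * (maxdeg e)%:R)
  /\ (2^-1 <= a ->
     Sk k sAa >= a * Sk k sQ + (1 - 2 * a) * Sk k sA)
  /\ (regular e ->
        (a <= 2^-1 ->
           Sk k sAa = (1 - a) * Sk k sQ + (2 * a - 1) * k%:R * (maxdeg e)%:R)
     /\ (2^-1 <= a ->
           Sk k sAa = a * Sk k sQ + (1 - 2 * a) * Sk k sA)).
Proof.
move=> sg /andP[k0 kn] /andP[a0 a1] srA cpA srQ cpQ srAa cpAa.
have ar : a^* = a by apply/CrealP/ger0_real.
have hA := adjm_her sg.
have hQ : (signlessm C e)^t* = signlessm C e by rewrite /signlessm tconjD degm_her hA.
have hAa := Aalpha_her sg ar.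
have leA : forall U : 'M_(k, n), U *m U^t* = 1%:M -> FF U (adjm C e) <= Sk k sA.
  by move=> U UU; exact: (kf_le hA srA cpA k0 kn UU).
have leQ : forall U : 'M_(k, n), U *m U^t* = 1%:M -> FF U (signlessm C e) <= Sk k sQ.
  by move=> U UU; exact: (kf_le hQ srQ cpQ k0 kn UU).
have leAa : forall U : 'M_(k, n), U *m U^t* = 1%:M -> FF U (Aalpha e a) <= Sk k sAa.
  by move=> U UU; exact: (kf_le hAa srAa cpAa k0 kn UU).
have [UQ UQu UQe] : exists2 U : 'M_(k, n), U *m U^t* = 1%:M & FF U (signlessm C e) = Sk k sQ.
  exact: (kf_attain (k:=k) hQ cpQ kn).
have [UA UAu UAe] : exists2 U : 'M_(k, n), U *m U^t* = 1%:M & FF U (adjm C e) = Sk k sA.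
  exact: (kf_attain (k:=k) hA cpA kn).
have [UAa UAau UAae] : exists2 U : 'M_(k, n), U *m U^t* = 1%:M & FF U (Aalpha e a) = Sk k sAa.
  exact: (kf_attain (k:=k) hAa cpAa kn).
have FQ : forall U : 'M_(k, n), FF U (signlessm C e) = FF U (degm C e) + FF U (adjm C e).
  by move=> U; rewrite /signlessm FFD.
have FAa : forall U : 'M_(k, n),
    FF U (Aalpha e a) = a * FF U (degm C e) + (1 - a) * FF U (adjm C e).
  by move=> U; rewrite /Aalpha FFD !FFZ.
have two : (2 : C) * 2^-1 = 1 by rewrite mulfV // pnatr_eq0.
split.
  move=> ha; have c0 : 0 <= 1 - 2 * a.
    rewrite subr_ge0 -[X in _ <= X]two.
    by rewrite ler_wpM2l // ler0n.
  rewrite -UQe FQ; apply: le_trans (leAa _ UQu); rewrite FAa -subr_ge0.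
  set FD := FF UQ (degm C e); set FA := FF UQ (adjm C e).
  have := FF_deg e UQu; rewrite -/FD => hd.
  have -> : a * FD + (1 - a) * FA - ((1 - a) * (FD + FA) + (2 * a - 1) * k%:R * (maxdeg e)%:R)
     = (1 - 2 * a) * (k%:R * (maxdeg e)%:R - FD) by ring.
  by apply: mulr_ge0 => //; rewrite subr_ge0.
split.
  move=> ha; have c0 : 0 <= 2 * a - 1.
    rewrite subr_ge0 -[X in X <= _]two.
    by rewrite ler_wpM2l // ler0n.
  rewrite -UQe FQ; apply: le_trans (leAa _ UQu); rewrite FAa -subr_ge0.
  set FD := FF UQ (degm C e); set FA := FF UQ (adjm C e).
  have := leA _ UQu; rewrite -/FA => hd.
  have -> : a * FD + (1 - a) * FA - (a * (FD + FA) + (1 - 2 * a) * Sk k sA)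
     = (2 * a - 1) * (Sk k sA - FA) by ring.
  by apply: mulr_ge0 => //; rewrite subr_ge0.
move=> [r hr].
have Dr : degm C e = (r%:R)%:M.
  by apply/matrixP => i j; rewrite !mxE hr mulr_natl.
have Mr : maxdeg e = r.
  apply/eqP; rewrite eqn_leq; apply/andP; split.
    by apply/bigmax_leqP => i _; rewrite hr.
  by rewrite -(hr (Ordinal (leq_trans k0 kn))); exact: (@leq_bigmax _ (deg e)).
have FD : forall U : 'M_(k, n), U *m U^t* = 1%:M -> FF U (degm C e) = r%:R * k%:R.
  by move=> U UU; rewrite Dr FFs.
have SQe : Sk k sQ = r%:R * k%:R + Sk k sA.
  apply/le_anti/andP; split.
    by rewrite -UQe FQ FD // lerD2l; apply: leA.
  by rewrite -UAe -(FD UA UAu) -FQ; apply: leQ.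
have SAae : Sk k sAa = a * (r%:R * k%:R) + (1 - a) * Sk k sA.
  apply/le_anti/andP; split.
    by rewrite -UAae FAa FD // lerD2l ler_wpM2l ?subr_ge0 //; apply: leA.
  by rewrite -UAe -(FD UA UAu) -FAa; apply: leAa.
split => _; rewrite SAae SQe ?Mr; ring.
Qed.
End Gen.

Section Transport.
Variable R : rcfType.
Local Notation f := (real_complex R).

Lemma nth_mapf (s : seq R) i : (map f s)`_i = f s`_i.
Proof. by elim: s i => [|x s IH] [|i] //=; rewrite rmorph0. Qed.

Lemma SkM k (s : seq R) : f (Sk k s) = Sk k (map f s).
Proof. by rewrite /Sk rmorph_sum; apply: eq_bigr => i _; rewrite nth_mapf. Qed.

Lemma cpM n (M : 'M[R]_n) (s : seq R) : char_poly M = \prod_(x <- s) ('X - x%:P) ->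
  char_poly (map_mx f M) = \prod_(x <- map f s) ('X - x%:P).
Proof.
move=> cp; rewrite -map_char_poly cp rmorph_prod big_map; apply: eq_bigr => x _.
by rewrite rmorphB /= map_polyX map_polyC.
Qed.

Lemma srtM (s : seq R) : sorted >=%R s -> sorted >=%R (map f s).
Proof. by apply: homo_sorted => x y /=; rewrite lecR. Qed.

Lemma adjmM n (e : rel 'I_n) : map_mx f (adjm R e) = adjm (R[i]) e.
Proof. by apply/matrixP => i j; rewrite !mxE rmorph_nat. Qed.

Lemma degmM n (e : rel 'I_n) : map_mx f (degm R e) = degm (R[i]) e.
Proof. by apply/matrixP => i j; rewrite !mxE rmorphM !rmorph_nat. Qed.

Lemma signlessmM n (e : rel 'I_n) : map_mx f (signlessm R e) = signlessm (R[i]) e.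
Proof. by rewrite /signlessm map_mxD adjmM degmM. Qed.

Lemma AalphaM n (e : rel 'I_n) a : map_mx f (Aalpha e a) = Aalpha e (f a).
Proof. by rewrite /Aalpha map_mxD !map_mxZ adjmM degmM rmorphB rmorph1. Qed.

End Transport.

Local Close Scope sesquilinear_scope.

Theorem theorem5p1 (R : rcfType) (n : nat) (e : rel 'I_n) (k : nat) (a : R)
    (sA sQ sAa : seq R) :
  simple_graph e ->
  (1 <= k <= n)%N ->
  0 <= a <= 1 ->
  is_spectrum (adjm R e) sA ->
  is_spectrum (signlessm R e) sQ ->
  is_spectrum (Aalpha e a) sAa ->
  (a <= 2^-1 ->
     Sk k sAa >= (1 - a) * Sk k sQ + (2 * a - 1) * k%:R * (maxdeg e)%:R)
  /\ (2^-1 <= a ->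
     Sk k sAa >= a * Sk k sQ + (1 - 2 * a) * Sk k sA)
  /\ (regular e ->
        (a <= 2^-1 ->
           Sk k sAa = (1 - a) * Sk k sQ + (2 * a - 1) * k%:R * (maxdeg e)%:R)
     /\ (2^-1 <= a ->
           Sk k sAa = a * Sk k sQ + (1 - 2 * a) * Sk k sA)).
Proof.
move=> sg kk /andP[a0 a1] [srA cpA] [srQ cpQ] [srAa cpAa].
have cA := cpM cpA; have cQ := cpM cpQ; have cAa := cpM cpAa.
rewrite adjmM in cA; rewrite signlessmM in cQ; rewrite AalphaM in cAa.
have aC : 0 <= (a%:C)%C <= 1.
  by rewrite -(rmorph1 (real_complex R)) !lecR a0 a1.
have [H1 [H2 H3]] := main_gen sg kk aC (srtM srA) cA (srtM srQ) cQ (srtM srAa) cAa.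
have h2 : (2^-1 : R[i]) = (2^-1 : R)%:C%C by rewrite fmorphV rmorph_nat.
have Ef : forall x y : R, ((x%:C)%C = (y%:C)%C) -> x = y by move=> x y; apply: complexI.
split.
  move=> ha; rewrite -lecR !(rmorph_nat, rmorphD, rmorphM, rmorphB, rmorphN, rmorph1) /= !SkM.
  by apply: H1; rewrite h2 lecR.
split.
  move=> ha; rewrite -lecR !(rmorph_nat, rmorphD, rmorphM, rmorphB, rmorphN, rmorph1) /= !SkM.
  by apply: H2; rewrite h2 lecR.
move=> reg; have [H3a H3b] := H3 reg; split => ha; apply: Ef;
  rewrite !(rmorph_nat, rmorphD, rmorphM, rmorphB, rmorphN, rmorph1) /= !SkM.
  by apply: H3a; rewrite h2 lecR.
by apply: H3b; rewrite h2 lecR.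
Qed.
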